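(* Fix an attacker label $A\in\mathcal{L}$. For all labels $pc\in\mathcal{L}$, all initial configurations $c_1=\langle\Sigma_1,e_1\rangle$, $c_2=\langle\Sigma_2,e_2\rangle$ of $\lambda^{dFG}$, all environments $\theta_1,\theta_2$ and all final configurations $c_1',c_2'$: if $c_1\Downarrow^{\theta_1}_{pc} c_1'$, $c_2\Downarrow^{\theta_2}_{pc} c_2'$, $\theta_1\approx_A\theta_2$ and $c_1\approx_A c_2$, then $c_1'\approx_A c_2'$.
   Context: Fix a lattice $(\mathcal{L},\sqsubseteq,\sqcup)$ of security labels. The fine-grained calculus $\lambda^{dFG}$ has types $\tau::=\mathbf{unit}\mid\tau_1\to\tau_2\mid\tau_1+\tau_2\mid\tau_1\times\tau_2\mid\mathcal{L}\mid\mathbf{Ref}\,\tau$ (with a standard simple type system), expressions $e::=x\mid\lambda x.e\mid e_1\,e_2\mid()\mid\ell\mid(e_1,e_2)\mid\mathbf{fst}(e)\mid\mathbf{snd}(e)\mid\mathbf{inl}(e)\mid\mathbf{inr}(e)\mid\mathbf{case}(e,x.e_1,x.e_2)\mid\mathbf{getLabel}\mid\mathbf{labelOf}(e)\mid e_1\sqsubseteq^{?}e_2\mid\mathbf{taint}(e_1,e_2)\mid\mathbf{new}(e)\mid\,!e\mid e_1:=e_2\mid\mathbf{labelOfRef}(e)$, raw values $r::=()\mid(x.e,\theta)\mid\mathbf{inl}(v)\mid\mathbf{inr}(v)\mid(v_1,v_2)\mid\ell\mid n_\ell$ ($n\in\mathbb{N}$, $\ell\in\mathcal{L}$), values $v::=r^{\ell}$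 (raw value tagged by a label), and environments $\theta$ = finite maps from variables to values. For $v=r^{\ell}$ write $v\sqcup\ell'$ for $r^{\ell\sqcup\ell'}$. A memory is a finite list $M$ of raw values with length $|M|$, entries $M[n]$ ($n\ge 0$), and $M[n\mapsto r]$ the list with entry $n$ replaced by $r$ (or $r$ appended if $n=|M|$). A store $\Sigma$ assigns a memory $\Sigma(\ell)$ to every label $\ell$; $\Sigma[\ell\mapsto M]$ is the updated store. Evaluation $\langle\Sigma,e\rangle\Downarrow^{\theta}_{pc}\langle\Sigma',v\rangle$ is the least relation closed under the following rules; below ''$e\Downarrow v$'' means evaluation in the current $\theta$ and $pc$ unless said otherwise, the store is threaded through premises from left to right, the resulting store is that of the last premise, and rules without premises leave the store unchanged. (Var) $x\Downarrow\theta(x)\sqcup pc$. (Unit) $()\Downarrow()^{pc}$. (Label) $\ell\Downarrow\ell^{pc}$. (Fun) $\lambda x.e\Downarrow(x.e,\theta)^{pc}$. (GetLabel) $\mathbf{getLabel}\Downarrow pc^{pc}$. (App) if $e_1\Downarrow(x.e,\theta')^{\ell}$, $e_2\Downarrow v_2$, and $e$ evaluates to $v$ in environment $\theta'[x\mapsto v_2]$ with program counter $pc\sqcup\ell$, then $e_1\,e_2\Downarrow v$. (Inl/Inr) if $e\Downarrow v$ then $\mathbf{inl}(e)\Downarrow\mathbf{inl}(v)^{pc}$, $\mathbf{inr}(e)\Downarrow\mathbf{inr}(v)^{pc}$. (Case) if $e\Downarrow\mathbf{inl}(v_1)^{\ell}$ and $e_1$ evaluates to $v$ in $\theta[x\mapsto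 v_1]$ with program counter $pc\sqcup\ell$ then $\mathbf{case}(e,x.e_1,x.e_2)\Downarrow v$; symmetrically with $\mathbf{inr}(v_2)^{\ell}$ and $e_2$. (Pair) if $e_1\Downarrow v_1$, $e_2\Downarrow v_2$ then $(e_1,e_2)\Downarrow(v_1,v_2)^{pc}$. (Fst/Snd) if $e\Downarrow(v_1,v_2)^{\ell}$ then $\mathbf{fst}(e)\Downarrow v_1\sqcup\ell$ and $\mathbf{snd}(e)\Downarrow v_2\sqcup\ell$. (LabelOf) if $e\Downarrow r^{\ell}$ then $\mathbf{labelOf}(e)\Downarrow\ell^{\ell}$. (Compare) if $e_1\Downarrow\ell_1^{\ell_1'}$ and $e_2\Downarrow\ell_2^{\ell_2'}$ then $e_1\sqsubseteq^{?}e_2\Downarrow\mathbf{inl}(()^{pc})^{\ell_1'\sqcup\ell_2'}$ if $\ell_1\sqsubseteq\ell_2$, and $\Downarrow\mathbf{inr}(()^{pc})^{\ell_1'\sqcup\ell_2'}$ otherwise. (Taint) if $e_1\Downarrow\ell^{\ell'}$ with $\ell'\sqsubseteq\ell$, and $e_2$ evaluates to $v$ with program counter $\ell$, then $\mathbf{taint}(e_1,e_2)\Downarrow v$. (New) if $e\Downarrow r^{\ell}$ with resulting store $\Sigma'$ and $n=|\Sigma'(\ell)|$, then $\mathbf{new}(e)\Downarrow(n_\ell)^{pc}$ with final store $\Sigma'[\ell\mapsto\Sigma'(\ell)[n\mapsto r]]$. (Read) if $e\Downarrow(n_\ell)^{\ell'}$ with resulting store $\Sigma'$ and $\Sigma'(\ell)[n]=r$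 then $!e\Downarrow r^{\ell\sqcup\ell'}$. (Write) if $e_1\Downarrow(n_\ell)^{\ell_1}$ with $\ell_1\sqsubseteq\ell$ and $e_2\Downarrow r^{\ell_2}$ with resulting store $\Sigma''$ and $\ell_2\sqsubseteq\ell$, then $e_1:=e_2\Downarrow()^{pc}$ with final store $\Sigma''[\ell\mapsto\Sigma''(\ell)[n\mapsto r]]$. (LabelOfRef) if $e\Downarrow(n_\ell)^{\ell'}$ then $\mathbf{labelOfRef}(e)\Downarrow\ell^{\ell\sqcup\ell'}$. Initial configurations are $\langle\Sigma,e\rangle$, final ones $\langle\Sigma,v\rangle$; $c\Downarrow^{\theta}_{pc}c'$ denotes the evaluation relation. $A$-equivalence ($\approx_A$), defined mutually on values and raw values: $r_1^{\ell}\approx_A r_2^{\ell}$ if $\ell\sqsubseteq A$ and $r_1\approx_A r_2$; $r_1^{\ell_1}\approx_A r_2^{\ell_2}$ whenever $\ell_1\not\sqsubseteq A$ and $\ell_2\not\sqsubseteq A$; $()\approx_A()$; $\ell\approx_A\ell$; $(x.e_1,\theta_1)\approx_A(x.e_2,\theta_2)$ if $e_1,e_2$ are $\alpha$-equivalent and $\theta_1\approx_A\theta_2$; $\mathbf{inl}(v_1)\approx_A\mathbf{inl}(v_2)$ and $\mathbf{inr}(v_1)\approx_A\mathbf{inr}(v_2)$ if $v_1\approx_A v_2$; $(v_1,v_2)\approx_A(v_1',v_2')$ if $v_1\approx_A v_1'$ and $v_2\approx_A v_2'$; $n_\ell\approx_A n_\ell$ if $\ell\sqsubseteq A$; $(n_1)_{\ell_1}\approx_A(n_2)_{\ell_2}$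 if $\ell_1,\ell_2\not\sqsubseteq A$. Environments: $\theta_1\approx_A\theta_2$ iff same domain and pointwise related. Memories $M_1,M_2$ stored at label $\ell$: always related if $\ell\not\sqsubseteq A$; if $\ell\sqsubseteq A$, related iff $|M_1|=|M_2|$ and $M_1[n]\approx_A M_2[n]$ for all $n$. Stores: $\Sigma_1\approx_A\Sigma_2$ iff $\Sigma_1(\ell)\approx_A\Sigma_2(\ell)$ for all $\ell$. Initial configurations: $\langle\Sigma_1,e_1\rangle\approx_A\langle\Sigma_2,e_2\rangle$ iff $\Sigma_1\approx_A\Sigma_2$ and $e_1,e_2$ are $\alpha$-equivalent; final configurations: $\langle\Sigma_1,v_1\rangle\approx_A\langle\Sigma_2,v_2\rangle$ iff $\Sigma_1\approx_A\Sigma_2$ and $v_1\approx_A v_2$. *)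

(* Defs.v *)
From HB Require Import structures.
From mathcomp Require Import all_boot all_order.
Set Implicit Arguments. Unset Strict Implicit. Unset Printing Implicit Defensive.
Import Order.TTheory.
Local Open Scope order_scope.

Section DFG.
Context {disp : Order.disp_t} {L : latticeType disp}.

(* Expressions, with de Bruijn indices for variables: alpha-equivalent
   expressions are syntactically equal.  Binders: ELam e binds index 0 in e;
   ECase e e1 e2 binds index 0 in e1 and in e2. *)
Inductive expr : Type :=
  | EVar (x : nat)
  | ELam (e : expr)
  | EApp (e1 e2 : expr)
  | EUnit
  | ELab (l : L)
  | EPair (e1 e2 : expr)
  | EFst (e : expr)
  | ESnd (e : expr)
  | EInl (e : expr)
  | EInr (e : expr)
  | ECase (e e1 e2 : expr)
  | EGetLabel
  | ELabelOf (e : expr)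
  | ECmp (e1 e2 : expr)
  | ETaint (e1 e2 : expr)
  | ENew (e : expr)
  | ERead (e : expr)
  | EWrite (e1 e2 : expr)
  | ELabelOfRef (e : expr).

Inductive raw : Type :=
  | RUnit
  | RClos (e : expr) (th : seq value)
  | RInl (v : value)
  | RInr (v : value)
  | RPair (v1 v2 : value)
  | RLab (l : L)
  | RRef (n : nat) (l : L)
with value : Type :=
  | VTag (r : raw) (l : L).

Definition env := seq value.

Definition vjoin (v : value) (l' : L) : value :=
  let: VTag r l := v in VTag r (l `|` l').

Definition memory := seq raw.
Definition store := L -> memory.

(* M[n |-> r]: replace entry n, or append r when n = |M| (used only for n <= |M|) *)
Definition mem_upd (M : memory) (n : nat) (r : raw) : memory := set_nth RUnit M n r.

Definition store_upd (S : store) (l : L) (M : memory) : store :=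
  fun l' => if l' == l then M else S l'.

(* eval th pc S e S' v  :=  <S, e> ⇓^th_pc <S', v> *)
Inductive eval : env -> L -> store -> expr -> store -> value -> Prop :=
  | ev_var th pc S x v :
      onth th x = Some v -> eval th pc S (EVar x) S (vjoin v pc)
  | ev_unit th pc S : eval th pc S EUnit S (VTag RUnit pc)
  | ev_label th pc S l : eval th pc S (ELab l) S (VTag (RLab l) pc)
  | ev_fun th pc S e : eval th pc S (ELam e) S (VTag (RClos e th) pc)
  | ev_getlabel th pc S : eval th pc S EGetLabel S (VTag (RLab pc) pc)
  | ev_app th pc S S1 S2 S3 e1 e2 e th' l v2 v :
      eval th pc S e1 S1 (VTag (RClos e th') l) ->
      eval th pc S1 e2 S2 v2 ->
      eval (v2 :: th') (pc `|` l) S2 e S3 v ->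
      eval th pc S (EApp e1 e2) S3 v
  | ev_inl th pc S S1 e v : eval th pc S e S1 v -> eval th pc S (EInl e) S1 (VTag (RInl v) pc)
  | ev_inr th pc S S1 e v : eval th pc S e S1 v -> eval th pc S (EInr e) S1 (VTag (RInr v) pc)
  | ev_case_l th pc S S1 S2 e e1 e2 v1 l v :
      eval th pc S e S1 (VTag (RInl v1) l) ->
      eval (v1 :: th) (pc `|` l) S1 e1 S2 v ->
      eval th pc S (ECase e e1 e2) S2 v
  | ev_case_r th pc S S1 S2 e e1 e2 v2 l v :
      eval th pc S e S1 (VTag (RInr v2) l) ->
      eval (v2 :: th) (pc `|` l) S1 e2 S2 v ->
      eval th pc S (ECase e e1 e2) S2 v
  | ev_pair th pc S S1 S2 e1 e2 v1 v2 :
      eval th pc S e1 S1 v1 -> eval th pc S1 e2 S2 v2 ->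
      eval th pc S (EPair e1 e2) S2 (VTag (RPair v1 v2) pc)
  | ev_fst th pc S S1 e v1 v2 l :
      eval th pc S e S1 (VTag (RPair v1 v2) l) -> eval th pc S (EFst e) S1 (vjoin v1 l)
  | ev_snd th pc S S1 e v1 v2 l :
      eval th pc S e S1 (VTag (RPair v1 v2) l) -> eval th pc S (ESnd e) S1 (vjoin v2 l)
  | ev_labelof th pc S S1 e r l :
      eval th pc S e S1 (VTag r l) -> eval th pc S (ELabelOf e) S1 (VTag (RLab l) l)
  | ev_cmp th pc S S1 S2 e1 e2 l1 l1' l2 l2' :
      eval th pc S e1 S1 (VTag (RLab l1) l1') ->
      eval th pc S1 e2 S2 (VTag (RLab l2) l2') ->
      eval th pc S (ECmp e1 e2) S2
        (VTag (if l1 <= l2 then RInl (VTag RUnit pc) else RInr (VTag RUnit pc))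
              (l1' `|` l2'))
  | ev_taint th pc S S1 S2 e1 e2 l l' v :
      eval th pc S e1 S1 (VTag (RLab l) l') -> l' <= l ->
      eval th l S1 e2 S2 v ->
      eval th pc S (ETaint e1 e2) S2 v
  | ev_new th pc S S1 e r l :
      eval th pc S e S1 (VTag r l) ->
      eval th pc S (ENew e)
        (store_upd S1 l (mem_upd (S1 l) (size (S1 l)) r))
        (VTag (RRef (size (S1 l)) l) pc)
  | ev_read th pc S S1 e n l l' :
      eval th pc S e S1 (VTag (RRef n l) l') ->
      n < size (S1 l) ->
      eval th pc S (ERead e) S1 (VTag (nth RUnit (S1 l) n) (l `|` l'))
  | ev_write th pc S S1 S2 e1 e2 n l l1 r l2 :
      eval th pc S e1 S1 (VTag (RRef n l) l1) -> l1 <= l ->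
      eval th pc S1 e2 S2 (VTag r l2) -> l2 <= l ->
      (n <= size (S2 l))%N ->
      eval th pc S (EWrite e1 e2) (store_upd S2 l (mem_upd (S2 l) n r)) (VTag RUnit pc)
  | ev_labelofref th pc S S1 e n l l' :
      eval th pc S e S1 (VTag (RRef n l) l') ->
      eval th pc S (ELabelOfRef e) S1 (VTag (RLab l) (l `|` l')).

Inductive val_eq (A : L) : value -> value -> Prop :=
  | veq_low r1 r2 l : l <= A -> raw_eq A r1 r2 -> val_eq A (VTag r1 l) (VTag r2 l)
  | veq_high r1 r2 l1 l2 : ~~ (l1 <= A) -> ~~ (l2 <= A) -> val_eq A (VTag r1 l1) (VTag r2 l2)
with raw_eq (A : L) : raw -> raw -> Prop :=
  | req_unit : raw_eq A RUnit RUnit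
  | req_lab l : raw_eq A (RLab l) (RLab l)
  | req_clos e th1 th2 : env_eq A th1 th2 -> raw_eq A (RClos e th1) (RClos e th2)
  | req_inl v1 v2 : val_eq A v1 v2 -> raw_eq A (RInl v1) (RInl v2)
  | req_inr v1 v2 : val_eq A v1 v2 -> raw_eq A (RInr v1) (RInr v2)
  | req_pair v1 v2 v1' v2' : val_eq A v1 v1' -> val_eq A v2 v2' ->
      raw_eq A (RPair v1 v2) (RPair v1' v2')
  | req_ref_low n l : l <= A -> raw_eq A (RRef n l) (RRef n l)
  | req_ref_high n1 n2 l1 l2 : ~~ (l1 <= A) -> ~~ (l2 <= A) ->
      raw_eq A (RRef n1 l1) (RRef n2 l2)
with env_eq (A : L) : env -> env -> Prop :=
  | eeq_nil : env_eq A [::] [::]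
  | eeq_cons v1 v2 th1 th2 : val_eq A v1 v2 -> env_eq A th1 th2 ->
      env_eq A (v1 :: th1) (v2 :: th2).

Definition mem_eq (A l : L) (M1 M2 : memory) : Prop :=
  ~~ (l <= A) \/
  (size M1 = size M2 /\ forall n, n < size M1 -> raw_eq A (nth RUnit M1 n) (nth RUnit M2 n)).

Definition store_eq (A : L) (S1 S2 : store) : Prop :=
  forall l, mem_eq A l (S1 l) (S2 l).

Definition init_cfg := (store * expr)%type.
Definition final_cfg := (store * value)%type.

Definition eval_cfg (th : env) (pc : L) (c : init_cfg) (c' : final_cfg) : Prop :=
  eval th pc c.1 c.2 c'.1 c'.2.

Definition init_eq (A : L) (c1 c2 : init_cfg) : Prop :=
  store_eq A c1.1 c2.1 /\ c1.2 = c2.2.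

Definition final_eq (A : L) (c1 c2 : final_cfg) : Prop :=
  store_eq A c1.1 c2.1 /\ val_eq A c1.2 c2.2.

End DFG.

(* Main.v *)
Require Import Defs.
From mathcomp Require Import all_boot all_order zify.
Import Order.TTheory.
Set Implicit Arguments. Unset Strict Implicit.
Local Open Scope order_scope.

Section NI.
Context {disp : Order.disp_t} {L : latticeType disp}.
Implicit Types (A pc l : L).

Definition lab (v : @value disp L) : L := let: VTag _ l := v in l.

Lemma hiU A a b : ~~ (a <= A) -> ~~ (a `|` b <= A).
Proof. by move=> H; rewrite leUx negb_and H. Qed.
Lemma hiU2 A a b : ~~ (b <= A) -> ~~ (a `|` b <= A).
Proof. by move=> H; rewrite leUx negb_and H orbT. Qed.
Lemma hi_le A a b : a <= b -> ~~ (a <= A) -> ~~ (b <= A).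
Proof. move=> Hab /negP Ha; apply/negP => Hb; apply: Ha; exact: le_trans Hab Hb. Qed.

Lemma eval_lab th pc S e S' v : @eval disp L th pc S e S' v -> pc <= lab v.
Proof.
elim=> //=; clear.
- by move=> th pc S x [r l] _ /=; rewrite leUr.
- move=> th pc S S1 S2 S3 e1 e2 e th' l v2 v _ _ _ _ _ H; exact: le_trans (leUl _ _) H.
- move=> th pc S S1 S2 e e1 e2 v1 l v _ _ _ H; exact: le_trans (leUl _ _) H.
- move=> th pc S S1 S2 e e1 e2 v1 l v _ _ _ H; exact: le_trans (leUl _ _) H.
- move=> th pc S S1 e [r1 l1] v2 l _ /= H; exact: le_trans H (leUr _ _).
- move=> th pc S S1 e v1 [r2 l2] l _ /= H; exact: le_trans H (leUr _ _).
- move=> th pc S S1 S2 e1 e2 l1 l1' l2 l2' _ H _ _; exact: le_trans H (leUl _ _).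
- move=> th pc S S1 S2 e1 e2 l l' v _ H1 H2 _ H3; exact: le_trans H1 (le_trans H2 H3).
- move=> th pc S S1 e n l l' _ H _; exact: le_trans H (leUr _ _).
- move=> th pc S S1 e n l l' _ H; exact: le_trans H (leUr _ _).
Qed.

Lemma confine A th pc S e S' v : @eval disp L th pc S e S' v -> ~~ (pc <= A) ->
  forall l, l <= A -> S' l = S l.
Proof.
elim=> //=; clear.
- move=> th pc S S1 S2 S3 e1 e2 e th' l v2 v _ IH1 _ IH2 _ IH3 Hpc l0 Hl0.
  by rewrite IH3 ?IH2 ?IH1 //; exact: hiU.
- move=> th pc S S1 S2 e e1 e2 v1 l v _ IH1 _ IH2 Hpc l0 Hl0.
  by rewrite IH2 ?IH1 //; exact: hiU.
- move=> th pc S S1 S2 e e1 e2 v1 l v _ IH1 _ IH2 Hpc l0 Hl0.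
  by rewrite IH2 ?IH1 //; exact: hiU.
- move=> th pc S S1 S2 e1 e2 v1 v2 _ IH1 _ IH2 Hpc l0 Hl0.
  by rewrite IH2 ?IH1.
- move=> th pc S S1 S2 e1 e2 l1 l1' l2 l2' _ IH1 _ IH2 Hpc l0 Hl0.
  by rewrite IH2 ?IH1.
- move=> th pc S S1 S2 e1 e2 l l' v H1 IH1 Hll' H2 IH2 Hpc l0 Hl0.
  have Hl' := eval_lab H1.
  rewrite IH2 ?IH1 //; apply: hi_le Hll' _; exact: hi_le Hl' Hpc.
- move=> th pc S S1 e r l H IH Hpc l0 Hl0.
  have Hl := eval_lab H.
  rewrite /store_upd; case: eqP => [E|_]; last exact: IH.
  subst l0; have := hi_le Hl Hpc; by rewrite Hl0.
- move=> th pc S S1 S2 e1 e2 n l l1 r l2 H1 IH1 Hl1 H2 IH2 Hl2 _ Hpc l0 Hl0.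
  have Hl := eval_lab H1.
  rewrite /store_upd; case: eqP => [E|_]; last by rewrite IH2 ?IH1.
  subst l0; have := hi_le Hl1 (hi_le Hl Hpc); by rewrite Hl0.
Qed.

Lemma ni_high A th1 th2 pc1 pc2 S1 S2 e1 e2 S1' S2' v1 v2 :
  @eval disp L th1 pc1 S1 e1 S1' v1 -> eval th2 pc2 S2 e2 S2' v2 ->
  ~~ (pc1 <= A) -> ~~ (pc2 <= A) -> store_eq A S1 S2 ->
  store_eq A S1' S2' /\ val_eq A v1 v2.
Proof.
move=> H1 H2 Hp1 Hp2 Hst; split.
- move=> l; case Hl: (l <= A); last by left; rewrite Hl.
  by rewrite (confine H1 Hp1 Hl) (confine H2 Hp2 Hl).
- move: (eval_lab H1) (eval_lab H2); clear H1 H2; case: v1 => r1 l1; case: v2 => r2 l2 /= h1 h2.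
  apply: veq_high; [exact: hi_le h1 Hp1 | exact: hi_le h2 Hp2].
Qed.

Lemma env_lookup A th1 th2 x v1 v2 : @env_eq disp L A th1 th2 ->
  onth th1 x = Some v1 -> onth th2 x = Some v2 -> val_eq A v1 v2.
Proof.
move=> H; elim: H x => [|w1 w2 t1 t2 Hw _ IH] [|x] //=.
- by move=> [<-] [<-].
- exact: IH.
Qed.

Lemma vjoin_eq A v1 v2 l : @val_eq disp L A v1 v2 -> val_eq A (vjoin v1 l) (vjoin v2 l).
Proof.
case=> [r1 r2 l0 Hl0 Hr|r1 r2 l1 l2 H1 H2] /=.
- case Hl: (l <= A).
  + by apply: veq_low => //; rewrite leUx Hl0 Hl.
  + by apply: veq_high; apply: hiU2; rewrite Hl.
- by apply: veq_high; apply: hiU.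
Qed.

Lemma store_upd_hi A S1 S2 l1 l2 M1 M2 : @store_eq disp L A S1 S2 ->
  ~~ (l1 <= A) -> ~~ (l2 <= A) -> store_eq A (store_upd S1 l1 M1) (store_upd S2 l2 M2).
Proof.
move=> H h1 h2 l; rewrite /store_upd.
case: eqP => [->|_]; first by left.
case: eqP => [->|_]; first by left.
exact: H.
Qed.

Lemma store_upd_lo A S1 S2 l n r1 r2 : @store_eq disp L A S1 S2 ->
  (n <= size (S1 l))%N -> raw_eq A r1 r2 ->
  store_eq A (store_upd S1 l (mem_upd (S1 l) n r1)) (store_upd S2 l (mem_upd (S2 l) n r2)).
Proof.
move=> H hn hr l'; rewrite /store_upd; case: eqP => [->|_]; last exact: H.
case: (H l) => [h|[hs hm]]; first by left.
right; rewrite /mem_upd; split; first by rewrite !size_set_nth hs.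
move=> m hm'; rewrite !nth_set_nth /=.
case: eqP => // Hmn; apply: hm.
move: hm' Hmn; rewrite size_set_nth => hm' /eqP Hmn; lia.
Qed.

Lemma vjoin_hi A v1 v2 l1 l2 : ~~ (l1 <= A) -> ~~ (l2 <= A) ->
  @val_eq disp L A (vjoin v1 l1) (vjoin v2 l2).
Proof. by case: v1 => r1 k1; case: v2 => r2 k2 h1 h2 /=; apply: veq_high; apply: hiU2. Qed.

Lemma ni_low A th1 pc S1 e S1' v1 : @eval disp L th1 pc S1 e S1' v1 ->
  forall th2 S2 S2' v2, eval th2 pc S2 e S2' v2 -> pc <= A ->
  env_eq A th1 th2 -> store_eq A S1 S2 -> store_eq A S1' S2' /\ val_eq A v1 v2.
Proof.
induction 1; intros th2 T T' w Hev Hpc Henv Hst; inversion Hev; subst.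
- split=> //; apply: vjoin_eq; exact: env_lookup Henv H H4.
- by split=> //; apply: veq_low => //; constructor.
- by split=> //; apply: veq_low => //; constructor.
- by split=> //; apply: veq_low => //; constructor.
- by split=> //; apply: veq_low => //; constructor.
- have [s1 v1'] := IHeval1 _ _ _ _ H4 Hpc Henv Hst.
  have [s2 v2'] := IHeval2 _ _ _ _ H8 Hpc Henv s1.
  inversion v1' as [r1 r2 l' Hl Hr|r1 r2 l1 l2 Hh1 Hh2]; subst.
  + inversion Hr as [| |e' t1 t2 Ht| | | | |]; subst.
    apply: IHeval3 H11 _ _ s2; first by rewrite leUx Hpc Hl.
    exact: eeq_cons.
  + exact: ni_high H1 H11 (hiU2 _ Hh1) (hiU2 _ Hh2) s2.
- have [s v'] := IHeval _ _ _ _ H4 Hpc Henv Hst.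
  by split=> //; apply: veq_low => //; constructor.
- have [s v'] := IHeval _ _ _ _ H4 Hpc Henv Hst.
  by split=> //; apply: veq_low => //; constructor.
- have [s1 v1'] := IHeval1 _ _ _ _ H9 Hpc Henv Hst.
  inversion v1' as [r1 r2 l' Hl Hr|r1 r2 l1 l2 Hh1 Hh2]; subst;
  first [ (inversion Hr; subst;
    apply: (IHeval2 _ _ _ _ H10 _ _ s1); [by rewrite leUx Hpc Hl | by apply: eeq_cons])
  | exact: ni_high H0 H10 (hiU2 _ Hh1) (hiU2 _ Hh2) s1 ].
- have [s1 v1'] := IHeval1 _ _ _ _ H9 Hpc Henv Hst.
  inversion v1' as [r1 r2 l' Hl Hr|r1 r2 l1 l2 Hh1 Hh2]; subst.
  inversion Hr.
  exact: ni_high H0 H10 (hiU2 _ Hh1) (hiU2 _ Hh2) s1.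
- have [s1 v1'] := IHeval1 _ _ _ _ H9 Hpc Henv Hst.
  inversion v1' as [r1 r2 l' Hl Hr|r1 r2 l1 l2 Hh1 Hh2]; subst.
  inversion Hr.
  exact: ni_high H0 H10 (hiU2 _ Hh1) (hiU2 _ Hh2) s1.
- have [s1 v1'] := IHeval1 _ _ _ _ H9 Hpc Henv Hst.
  inversion v1' as [r1 r2 l' Hl Hr|r1 r2 l1 l2 Hh1 Hh2]; subst;
  first [ (inversion Hr; subst;
    apply: (IHeval2 _ _ _ _ H10 _ _ s1); [by rewrite leUx Hpc Hl | by apply: eeq_cons])
  | exact: ni_high H0 H10 (hiU2 _ Hh1) (hiU2 _ Hh2) s1 ].
- have [s1 w1] := IHeval1 _ _ _ _ H6 Hpc Henv Hst.
  have [s2 w2] := IHeval2 _ _ _ _ H9 Hpc Henv s1.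
  by split=> //; apply: veq_low => //; constructor.
- have [s1 w1] := IHeval _ _ _ _ H4 Hpc Henv Hst.
  split=> //.
  inversion w1 as [r1 r2 l' Hl Hr|r1 r2 l1 l2 Hh1 Hh2]; subst;
  first [ (inversion Hr; subst; exact: vjoin_eq) | exact: vjoin_hi Hh1 Hh2 ].
- have [s1 w1] := IHeval _ _ _ _ H4 Hpc Henv Hst.
  split=> //.
  inversion w1 as [r1 r2 l' Hl Hr|r1 r2 l1 l2 Hh1 Hh2]; subst;
  first [ (inversion Hr; subst; exact: vjoin_eq) | exact: vjoin_hi Hh1 Hh2 ].
- have [s1 w1] := IHeval _ _ _ _ H4 Hpc Henv Hst.
  split=> //.
  inversion w1 as [r1 r2 l' Hl Hr|r1 r2 l1 l2 Hh1 Hh2]; subst;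
  first [ (apply: veq_low => //; constructor) | exact: veq_high Hh1 Hh2 ].
- have [s1 w1] := IHeval1 _ _ _ _ H6 Hpc Henv Hst.
  have [s2 w2] := IHeval2 _ _ _ _ H9 Hpc Henv s1.
  split=> //.
  inversion w1 as [r1 r2 l' Hl Hr|r1 r2 k1 k2 Hh1 Hh2]; subst;
    last by apply: veq_high; apply: hiU.
  inversion w2 as [r1' r2' l'' Hl' Hr'|r1' r2' k1' k2' Hh1' Hh2']; subst;
    last by apply: veq_high; apply: hiU2.
  inversion Hr; inversion Hr'; subst.
  apply: veq_low; first by rewrite leUx Hl Hl'.
  by case: (_ <= _); constructor; apply: veq_low => //; constructor.
- have [s1 w1] := IHeval1 _ _ _ _ H4 Hpc Henv Hst.
  inversion w1 as [r1 r2 l'' Hl Hr|r1 r2 k1 k2 Hh1 Hh2]; subst;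
    last exact: ni_high H1 H11 (hi_le H0 Hh1) (hi_le H8 Hh2) s1.
  inversion Hr; subst.
  case Hl0: (l0 <= A); first exact: IHeval2 _ _ _ _ H11 Hl0 Henv s1.
  by apply: ni_high H1 H11 _ _ s1; rewrite Hl0.
- have [s1 w1] := IHeval _ _ _ _ H4 Hpc Henv Hst.
  inversion w1 as [r1 r2 l'' Hl Hr|r1 r2 k1 k2 Hh1 Hh2]; subst; last first.
    split; first exact: store_upd_hi s1 Hh1 Hh2.
    by apply: veq_low => //; apply: req_ref_high.
  have Hsz : size (S1 l0) = size (S2 l0).
    by case: (s1 l0) => [|[]//]; rewrite Hl.
  split; first by rewrite -Hsz; exact: store_upd_lo s1 (leqnn _) Hr.
  by rewrite Hsz; apply: veq_low => //; apply: req_ref_low.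
- have [s1 w1] := IHeval _ _ _ _ H2 Hpc Henv Hst.
  split=> //.
  inversion w1 as [r1 r2 l'' Hl Hr|r1 r2 k1 k2 Hh1 Hh2]; subst; last first.
    by apply: veq_high; apply: hiU2.
  inversion Hr as [| | | | | |n1 k Hk|n1 n2 k1 k2 Hk1 Hk2]; subst; last first.
    by apply: veq_high; apply: hiU.
  apply: veq_low; first by rewrite leUx Hk Hl.
  by case: (s1 l0) => [|[_ hm]]; [rewrite Hk | exact: hm].
- have [s1 w1] := IHeval1 _ _ _ _ H6 Hpc Henv Hst.
  have [s2 w2] := IHeval2 _ _ _ _ H8 Hpc Henv s1.
  split; last by apply: veq_low => //; constructor.
  case Hl: (l <= A).
    have Hl1 : l1 <= A by exact: le_trans H0 Hl.
    have Hl2 : l2 <= A by exact: le_trans H2 Hl.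
    inversion w1 as [r1 r2 l'' Hx Hr|r1 r2 k1 k2 Hh1 Hh2]; subst; last by rewrite Hl1 in Hh1.
    inversion Hr as [| | | | | |n1 k Hk|n1 n2 k1 k2 Hk1 Hk2]; subst; last by rewrite Hl in Hk1.
    inversion w2 as [r1' r2' l''' Hx' Hr'|r1' r2' k1' k2' Hh1' Hh2']; subst; last by rewrite Hl2 in Hh1'.
    exact: store_upd_lo s2 H3 Hr'.
  case Hl0: (l0 <= A); last by apply: store_upd_hi s2 _ _; rewrite ?Hl ?Hl0.
  have Hl3 : l3 <= A by exact: le_trans H7 Hl0.
  inversion w1 as [r1 r2 l'' Hx Hr|r1 r2 k1 k2 Hh1 Hh2]; subst; last by rewrite Hl3 in Hh2.
  inversion Hr as [| | | | | |n1 k Hk|n1 n2 k1 k2 Hk1 Hk2]; subst; first by rewrite Hl0 in Hl.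
  by rewrite Hl0 in Hk2.
- have [s1 w1] := IHeval _ _ _ _ H4 Hpc Henv Hst.
  split=> //.
  inversion w1 as [r1 r2 l'' Hl Hr|r1 r2 k1 k2 Hh1 Hh2]; subst; last first.
    by apply: veq_high; apply: hiU2.
  inversion Hr as [| | | | | |n1 k Hk|n1 n2 k1 k2 Hk1 Hk2]; subst; last first.
    by apply: veq_high; apply: hiU.
  by apply: veq_low; [rewrite leUx Hk Hl | constructor].
Qed.

Theorem ni A pc th1 th2 S1 S2 e S1' S2' v1 v2 :
  @eval disp L th1 pc S1 e S1' v1 -> eval th2 pc S2 e S2' v2 ->
  env_eq A th1 th2 -> store_eq A S1 S2 -> store_eq A S1' S2' /\ val_eq A v1 v2.
Proof.
move=> H1 H2 He Hs; case Hpc: (pc <= A).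
- exact: ni_low H1 _ _ _ _ H2 Hpc He Hs.
- by apply: ni_high H1 H2 _ _ Hs; rewrite Hpc.
Qed.
End NI.

Theorem mainTheorem1 (disp : Order.disp_t) (L : latticeType disp) (A : L) :
  forall (pc : L) (c1 c2 : @init_cfg disp L) (th1 th2 : @env disp L)
         (c1' c2' : @final_cfg disp L),
    eval_cfg th1 pc c1 c1' ->
    eval_cfg th2 pc c2 c2' ->
    env_eq A th1 th2 ->
    init_eq A c1 c2 ->
    final_eq A c1' c2'.
Proof.
move=> pc [S1 e1] [S2 e2] th1 th2 [S1' v1] [S2' v2] /= H1 H2 He [/= Hs Ee].
subst e2; exact: ni H1 H2 He Hs.
Qed.
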